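(* In the setting described in the context, under the non-atomic assumption, for any player $i$, any contention windows $W_{-i}$ of the other players, and any $W_i<W_i'$, one has $\widehat S_i(W_i,W_{-i})>\widehat S_i(W_i',W_{-i})$; that is, given any strategies of the others, player $i$ obtains a strictly higher utility by decreasing its contention window.
   Context: Model: users $\mathcal N=\{1,\dots,n\}$, fixed integer $m\ge1$. User $i$ chooses a contention window (CW) $W_i\in\{0,1,2,\dots\}$ and a data rate $R_i\in[R_{min,i},R_{max,i}]$; $e_i$ is its packet error rate function (values in $[0,1]$, increasing in the rate), $G_i(R)=(1-e_i(R))R$. For $x\in[0,1]$, $\Gamma_i(x)=\frac{2}{W_i+1+xW_i\sum_{l=0}^{m-1}(2x)^l}$. Given $(W_j,R_j)_j$, the stationary state $(\tau_j,p_j,q_j)_j$ (assumed unique) solves $q_j=1-(1-p_j)(1-e_j(R_j))$, $\tau_j=\Gamma_j(q_j)$, $p_j=1-\prod_{k\ne j}(1-\tau_k)$; $\rho_j=1-\tau_j$. Utility: $S_i=\frac{(1-\rho_i)\prod_{j\ne i}\rho_j\,G_i(R_i)}{1-\prod_{j}\rho_j}$. For a CW profile $\mathbf W$, $\mathbf R^*(\mathbf W)$ denotes the unique Nash equilibrium of the rate adaptation game in which each player $i$ chooses $R_i\in[R_{min,i},R_{max,i}]$ to maximize $S_i$ with $\mathbf W$ fixed; and $\widehat S_i(\mathbf W)=S_i(\mathbf W,\mathbf R^*(\mathbf W))$ is the utility of player $i$ in the medium access game $G_M$. Non-atomic assumption: the number of users is large, so changing user $i$'s CW and rate leaves the states $(q_j,\tau_j,R_j)$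 of the other users $j\ne i$ unchanged; and $\prod_{j\in\mathcal N}\rho_j\simeq\prod_{j\ne i}\rho_j$. *)

(* Defs.v *)
From HB Require Import structures.
From mathcomp Require Import all_boot all_order all_algebra.
Set Implicit Arguments. Unset Strict Implicit. Unset Printing Implicit Defensive.
Import Order.TTheory GRing.Theory Num.Theory.
Local Open Scope ring_scope.

Section Model.
Variable R : realFieldType.

Definition Gamma (m W : nat) (x : R) : R :=
  2 / (W%:R + 1 + x * W%:R * \sum_(l < m) (2 * x) ^+ l).

(* prod_{j <> i} rho_j, with rho_j = 1 - tau_j (states of the other users,
   frozen by the non-atomic assumption) *)
Definition prod_rho_others (n : nat) (i : 'I_n) (tau : 'I_n -> R) : R :=
  \prod_(j < n | j != i) (1 - tau j).

Definition p_of (n : nat) (i : 'I_n) (tau : 'I_n -> R) : R :=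
  1 - prod_rho_others i tau.

Definition goodput (e : R -> R) (r : R) : R := (1 - e r) * r.

(* stationary tau_i of user i playing (W_i, R_i), others frozen:
   q_i = 1 - (1 - p_i)(1 - e_i(R_i)),  tau_i = Gamma_i(q_i) *)
Definition tau_i (m n : nat) (i : 'I_n) (tau : 'I_n -> R) (e : R -> R)
  (W : nat) (r : R) : R :=
  Gamma m W (1 - (1 - p_of i tau) * (1 - e r)).

(* utility S_i under the non-atomic assumption
   (prod_j rho_j replaced by prod_{j<>i} rho_j in the denominator) *)
Definition S_na (m n : nat) (i : 'I_n) (tau : 'I_n -> R) (e : R -> R)
  (W : nat) (r : R) : R :=
  let rho_i := 1 - tau_i m i tau e W r in
  (1 - rho_i) * prod_rho_others i tau * goodput e r
  / (1 - prod_rho_others i tau).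

Definition best_rate (Rmin Rmax : R) (f : R -> R) (r : R) : Prop :=
  Rmin <= r <= Rmax /\ (forall r', Rmin <= r' <= Rmax -> f r' <= f r).

Definition S_hat (m n : nat) (i : 'I_n) (tau : 'I_n -> R) (e : R -> R)
  (Rstar : nat -> R) (W : nat) : R :=
  S_na m i tau e W (Rstar W).

End Model.

(* Main.v *)
Require Import Defs.
From HB Require Import structures.
From mathcomp Require Import all_boot all_order all_algebra.
Import Order.TTheory GRing.Theory Num.Theory.
Local Open Scope ring_scope.

Lemma Gamma_lt (R : realFieldType) (m W W' : nat) (q : R) :
  0 <= q -> (W < W')%N -> Gamma m W' q < Gamma m W q.
Proof.
move=> q0 WW; rewrite /Gamma.
set s := \sum_(l < m) (2 * q) ^+ l.
have s0 : 0 <= s by apply: sumr_ge0 => l _; apply: exprn_ge0; rewrite mulr_ge0.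
have qs : 0 <= q * s by rewrite mulr_ge0.
have D0 : 0 < W%:R + 1 + q * W%:R * s :> R.
  by rewrite -mulrA (mulrC W%:R) mulrA ltr_wpDr ?mulr_ge0 // ltr_pwDr.
have D1 : W%:R + 1 + q * W%:R * s < W'%:R + 1 + q * W'%:R * s :> R.
  rewrite -!mulrA !(mulrC _ s) !mulrA.
  apply: ltr_leD; first by rewrite ltrD2r ltr_nat.
  by apply: ler_wpM2l => //; rewrite ler_nat ltnW.
rewrite ltr_pM2l //; rewrite ltf_pV2 ?posrE //; exact: lt_trans D1.
Qed.

Theorem lemma5 (R : realFieldType) (m n : nat) (i : 'I_n)
    (Wo : 'I_n -> nat) (qo : 'I_n -> R)
    (e : R -> R) (Rmin Rmax : R) (Rstar : nat -> R) (W W' : nat) :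
  (1 <= m)%N ->
  (1 < n)%N ->
  (forall j, j != i -> 0 <= qo j <= 1) ->
  (forall j, j != i -> 0 < Gamma m (Wo j) (qo j) < 1) ->
  0 < Rmin -> Rmin <= Rmax ->
  (forall r, Rmin <= r <= Rmax -> 0 <= e r < 1) ->
  (forall x y, Rmin <= x -> x <= y -> y <= Rmax -> e x <= e y) ->
  (forall w : nat, best_rate Rmin Rmax
       (S_na m i (fun j => Gamma m (Wo j) (qo j)) e w) (Rstar w)) ->
  (W < W')%N ->
  S_hat m i (fun j => Gamma m (Wo j) (qo j)) e Rstar W'
  < S_hat m i (fun j => Gamma m (Wo j) (qo j)) e Rstar W.
Proof.
move=> _ n1 _ Hg Rm0 _ He _ Hbr WW.
set tau := fun j => Gamma m (Wo j) (qo j).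
have [j0 Hj0] : exists j : 'I_n, j != i.
  case: (eqVneq (val i) 0%N) => Hi.
    by exists (Ordinal n1); apply/eqP => /(congr1 val) /=; rewrite Hi.
  by exists (Ordinal (ltn_trans (ltnSn 0) n1)); apply/eqP => /(congr1 val) /= H; move/eqP: Hi; apply; exact: esym H.
set P := prod_rho_others i tau.
have fac : forall j, j != i -> 0 < 1 - tau j < 1.
  move=> j /Hg /andP [a b]; apply/andP; split; first by rewrite subr_gt0.
  by rewrite ltrBlDr ltrDl.
have P0 : 0 < P by rewrite /P /prod_rho_others; apply: prodr_gt0 => j /fac /andP [].
have P1 : P < 1.
  rewrite /P /prod_rho_others (bigD1 j0) //=.
  have r1 : \prod_(j < n | (j != i) && (j != j0)) (1 - tau j) <= 1.
    by apply: prodr_ile1 => j /andP [/fac /andP [a b] _]; rewrite ltW // ltW.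
  have r0 : 0 <= \prod_(j < n | (j != i) && (j != j0)) (1 - tau j).
    by apply: prodr_ge0 => j /andP [/fac /andP [a b] _]; rewrite ltW.
  have /andP [a b] := fac _ Hj0.
  by apply: (le_lt_trans (ler_piMr _ r1)) => //; rewrite ltW.
have [/andP [Hr1 Hr2] _] := Hbr W'.
have [_ Hmax] := Hbr W.
set r := Rstar W'.
apply: (lt_le_trans _ (Hmax r _)); last by rewrite Hr1 Hr2.
rewrite /S_hat -/r.
have /andP [e0 e1] := He r (introT andP (conj Hr1 Hr2)).
have E : forall x : R, 1 - (1 - x) = x by move=> x; rewrite opprB addrC subrK.
rewrite /S_na /tau_i -/P -/tau !E.
have K : 0 < P * goodput e r / (1 - P).
  rewrite divr_gt0 ?subr_gt0 // mulr_gt0 // /goodput mulr_gt0 ?subr_gt0 //.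
  exact: lt_le_trans Rm0 Hr1.
suff H : Gamma m W' (1 - (1 - p_of i tau) * (1 - e r)) < Gamma m W (1 - (1 - p_of i tau) * (1 - e r)).
  move: H; rewrite -(ltr_pM2r K) /goodput /p_of !E -/P !mulrA; exact.
apply: Gamma_lt => //.
rewrite /p_of -/P E subr_ge0.
apply: mulr_ile1; rewrite ?subr_ge0 ?(ltW P0) ?(ltW P1) ?(ltW e1) //.
by rewrite lerBlDr lerDl.
Qed.
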